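(* Let $n, r$ be positive integers and let $G$ be a graph all of whose vertices have degree at least $r$. Then $$m_e(G\square K_n, r)\leqslant\sum_{t=0}^{n-1} m_e(G, r-t),$$ where $m_e(G, i)$ is defined to be $0$ if $i\leqslant0$.
   Context: All graphs are finite, simple and undirected; $K_n$ is the complete graph on $n$ vertices. The Cartesian product $G\square H$ has vertex set $V(G)\times V(H)$, with $(g_1,h_1)$ adjacent to $(g_2,h_2)$ iff either $g_1=g_2$ and $h_1h_2\in E(H)$, or $h_1=h_2$ and $g_1g_2\in E(G)$. Given graphs $G$ and $H$, the $H$-bootstrap percolation process on $G$ starts with a set $E_0\subseteq E(G)$ of initially activated edges, and for $i\geqslant1$, $E_i$ consists of $E_{i-1}$ together with all edges $e\in E(G)$ for which there is a subgraph $H_e$ of $G$ isomorphic to $H$ with $e\in E(H_e)$ and $E(H_e)\setminus\{e\}\subseteq E_{i-1}$. $E_0$ is a percolating set if $\bigcup_{i\geqslant0}E_i=E(G)$; $\mathrm{wsat}(G,H)$ is the minimum size of a percolating set. $m_e(G,r)=\mathrm{wsat}(G,S_{r+1})$, where $S_{r+1}$ is the star on $r+2$ vertices. *)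

(* Defs.v *)
From Stdlib Require Import ClassicalEpsilon.
From mathcomp Require Import all_boot.

Set Implicit Arguments.
Unset Strict Implicit.
Unset Printing Implicit Defensive.

(* A (finite simple) graph is given by a vertex finType and an adjacency
   relation; simplicity (symmetric + irreflexive) is assumed where needed. *)

Definition edgeset (T : finType) (adj : rel T) : {set {set T}} :=
  [set [set x; y] | x in T, y in T & adj x y].

Definition Kn (n : nat) : rel 'I_n := fun i j => i != j.
Arguments Kn : clear implicits.

Definition star (k : nat) : rel 'I_k.+1 :=
  fun i j => (i != j) && ((i == ord0) || (j == ord0)).
Arguments star : clear implicits.

Definition cartprod (T U : finType) (adjG : rel T) (adjH : rel U) : rel (T * U) :=
  fun u v => ((u.1 == v.1) && adjH u.2 v.2) || ((u.2 == v.2) && adjG u.1 v.1).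

(* An injective homomorphism f : H -> G; its image is a subgraph of G
   isomorphic to H, with edge set copy_edges. *)
Definition is_copy (TH T : finType) (adjH : rel TH) (adj : rel T)
  (f : {ffun TH -> T}) : bool :=
  injectiveb f && [forall x, forall y, adjH x y ==> adj (f x) (f y)].

Definition copy_edges (TH T : finType) (adjH : rel TH) (f : {ffun TH -> T})
  : {set {set T}} :=
  [set [set f x; f y] | x in TH, y in TH & adjH x y].

Definition bp_step (TH T : finType) (adjH : rel TH) (adj : rel T)
  (E : {set {set T}}) : {set {set T}} :=
  E :|: [set e in edgeset adj |
           [exists f : {ffun TH -> T},
              [&& is_copy adjH adj f, e \in copy_edges adjH f &
                  copy_edges adjH f :\ e \subset E]]].

Definition percolating (TH T : finType) (adjH : rel TH) (adj : rel T)
  (E0 : {set {set T}}) : Prop :=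
  E0 \subset edgeset adj /\
  (forall e, e \in edgeset adj <-> exists i : nat, e \in iter i (bp_step adjH adj) E0).

Definition percolatingb (TH T : finType) (adjH : rel TH) (adj : rel T)
  (E0 : {set {set T}}) : bool :=
  if excluded_middle_informative (percolating adjH adj E0) then true else false.

(* wsat(G, H): minimum size of a percolating set (E(G) itself percolates,
   so |E(G)| is a valid starting value for the min). *)
Definition wsat (TH T : finType) (adjH : rel TH) (adj : rel T) : nat :=
  \big[minn/#|edgeset adj|]_(E0 : {set {set T}} | percolatingb adjH adj E0) #|E0|.

(* m_e(G, i) = wsat(G, S_{i+1}) for i >= 1, and 0 for i <= 0 (i = 0 here,
   since the argument r - t is a truncated natural subtraction). *)
Definition me (T : finType) (adj : rel T) (i : nat) : nat :=
  if i == 0 then 0 else wsat (star i.+1) adj.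

(* Main.v *)
Require Import Defs.
From Stdlib Require Import ClassicalEpsilon.
From mathcomp Require Import all_boot.
Set Implicit Arguments. Unset Strict Implicit. Unset Printing Implicit Defensive.

Lemma edgesetP (T : finType) (adj : rel T) e :
  reflect (exists x y, adj x y /\ e = [set x; y]) (e \in edgeset adj).
Proof.
apply: (iffP idP).
  by case/imset2P => x y _; rewrite inE /= => h ->; exists x, y.
by case=> x [y [h ->]]; apply/imset2P; exists x y; rewrite ?inE.
Qed.

Lemma step_sub (TH T : finType) (adjH : rel TH) (adj : rel T) (E : {set {set T}}) :
  E \subset bp_step adjH adj E.
Proof. exact: subsetUl. Qed.

Lemma step_mono (TH T : finType) (adjH : rel TH) (adj : rel T) (E F : {set {set T}}) :
  E \subset F -> bp_step adjH adj E \subset bp_step adjH adj F.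
Proof.
move=> EF; apply/subsetP => e; rewrite !inE => /orP [eE|/andP [ee /existsP [f /and3P [h1 h2 h3]]]].
  by rewrite (subsetP EF).
apply/orP; right; rewrite ee; apply/existsP; exists f; rewrite h1 h2.
exact: subset_trans h3 EF.
Qed.

Lemma iter_mono (TH T : finType) (adjH : rel TH) (adj : rel T) (E : {set {set T}}) i j :
  i <= j -> iter i (bp_step adjH adj) E \subset iter j (bp_step adjH adj) E.
Proof.
move=> /subnK <-; elim: (j - i) => [|k IH] //=.
exact: subset_trans IH (step_sub _ _ _).
Qed.

Lemma iter_edges (TH T : finType) (adjH : rel TH) (adj : rel T) (E : {set {set T}}) i :
  E \subset edgeset adj -> iter i (bp_step adjH adj) E \subset edgeset adj.
Proof.
move=> EE; elim: i => //= i IH; apply/subsetP => e; rewrite inE => /orP [].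
  by move/(subsetP IH).
by rewrite inE => /andP [].
Qed.

Lemma fire (T : finType) (adj : rel T) (sym : symmetric adj) (irr : irreflexive adj)
  k (E : {set {set T}}) c y (S : {set T}) :
  adj c y -> (forall z, z \in S -> adj c z) -> y \notin S -> k <= #|S| ->
  (forall z, z \in S -> [set c; z] \in E) ->
  [set c; y] \in bp_step (star k.+1) adj E.
Proof.
move=> acy aS yS kS SE.
set s := [:: c, y & enum S].
have us : uniq s.
  rewrite /= enum_uniq !andbT !inE !mem_enum negb_or yS andbT.
  apply/andP; split.
    by apply/negP => /eqP e; move: acy; rewrite -e irr.
  by apply/negP => /aS; rewrite irr.
have ss : size s = #|S|.+2 by rewrite /= -cardE.
pose f := [ffun i : 'I_k.+2 => nth c s i].
pose o1 : 'I_k.+2 := @Ordinal k.+2 1 isT.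
have fin (i : 'I_k.+2) : i != ord0 -> i != o1 -> f i \in S.
  move=> i0 i1; rewrite ffunE.
  case: i i0 i1 => [[|[|m]] hm] //= _ _.
  rewrite -mem_enum mem_nth // -cardE; move: hm; rewrite !ltnS => hm.
  exact: leq_trans hm kS.
have f0 : f ord0 = c by rewrite ffunE.
have f1 : f o1 = y by rewrite ffunE.
have adjc (i : 'I_k.+2) : i != ord0 -> adj c (f i).
  move=> i0; case: (eqVneq i o1) => [->|i1]; first by rewrite f1.
  exact/aS/fin.
rewrite /bp_step inE; apply/orP; right; rewrite inE; apply/andP; split.
  by apply/edgesetP; exists c, y.
apply/existsP; exists f; apply/and3P; split.
- apply/andP; split.
    apply/injectiveP => i j; rewrite !ffunE => /eqP.
    rewrite nth_uniq // ?ss; last 2 first.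
      by apply: leq_trans (ltn_ord i) _; rewrite !ltnS.
      by apply: leq_trans (ltn_ord j) _; rewrite !ltnS.
    by move/eqP/val_inj.
  apply/forallP => i; apply/forallP => j; apply/implyP => /andP [ij] /orP [] /eqP e.
    by subst i; rewrite f0 adjc // eq_sym.
  by subst j; rewrite f0 sym adjc.
- apply/imset2P; exists ord0 o1; rewrite ?inE ?f0 ?f1 //.
- apply/subsetP => e; rewrite !inE => /andP [ne] /imset2P [i j _].
  rewrite inE /star => /andP [_] /andP [ij] /orP [] /eqP e0 ee; subst e; [subst i | subst j].
    rewrite f0; case: (eqVneq j o1) => [ej|j1].
      by rewrite ej f0 f1 eqxx in ne.
    by apply/SE/fin; rewrite // eq_sym.
  rewrite f0 setUC; case: (eqVneq i o1) => [ej|j1].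
    by rewrite ej f0 f1 setUC eqxx in ne.
  by apply/SE/fin.
Qed.

Lemma extract (T : finType) (adj : rel T) k (E : {set {set T}}) e :
  e \in bp_step (star k.+1) adj E -> e \in E \/
  exists c y (S : {set T}), [/\ e = [set c; y], adj c y,
    y \notin S, k <= #|S| &
    forall z, z \in S -> adj c z /\ [set c; z] \in E].
Proof.
rewrite /bp_step inE => /orP [eE|h]; [by left|right; move: h].
rewrite inE => /andP [_ /existsP [f /and3P [/andP [finj fadj] ein esub]]].
move/injectiveP in finj.
have hadj (i : 'I_k.+2) : i != ord0 -> adj (f ord0) (f i).
  move=> i0; move/forallP: fadj => /(_ ord0) /forallP /(_ i) /implyP; apply.
  by rewrite /star eq_sym i0 eqxx.
have [j /andP [j0 /eqP ee]] : exists j : 'I_k.+2, (j != ord0) && (e == [set f ord0; f j]).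
  case/imset2P: ein => a b _; rewrite inE /star => /andP [_] /andP [ab] /orP [] /eqP e0 ee.
    by subst a; exists b; rewrite -ee eqxx andbT eq_sym.
  by subst b; exists a; rewrite ab ee setUC eqxx.
subst e; exists (f ord0), (f j), (f @: [set i | (i != ord0) && (i != j)]); split => //.
- exact: hadj.
- apply/imsetP => [[i]]; rewrite inE => /andP [_ ij] /finj /eqP.
  by rewrite eq_sym (negbTE ij).
- rewrite card_imset //.
  have -> : [set i | (i != ord0) && (i != j)] = ~: [set ord0; j].
    by apply/setP => i; rewrite !inE negb_or.
  have h := cardsC [set ord0; j]; rewrite cards2 eq_sym j0 card_ord in h.
  by move/eqP: h; rewrite add2n !eqSS => /eqP ->.
- move=> z /imsetP [i]; rewrite inE => /andP [i0 ij] ->; split; first exact: hadj.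
  apply: (subsetP esub).
  rewrite !inE; apply/andP; split.
    apply/negP => /eqP h.
    have : f i \in [set f ord0; f j] by rewrite -h !inE eqxx orbT.
    rewrite !inE => /orP [] /eqP /finj /eqP; by rewrite ?(negbTE i0) ?(negbTE ij).
  by apply/imset2P; exists ord0 i; rewrite // inE /star eq_sym i0 eqxx.
Qed.

Lemma bigmin_le_gen (I : eqType) (s : seq I) (P : pred I) (F : I -> nat) d i0 :
  i0 \in s -> P i0 -> \big[minn/d]_(i <- s | P i) F i <= F i0.
Proof.
elim: s => // a s IH; rewrite inE big_cons => /orP [/eqP <- Pa|hs Pi]; first by rewrite Pa; exact: geq_minl.
case: ifP => _; last exact: IH.
exact: leq_trans (geq_minr _ _) (IH hs Pi).
Qed.

Lemma wsat_le (TH T : finType) (adjH : rel TH) (adj : rel T) (E0 : {set {set T}}) :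
  percolating adjH adj E0 -> wsat adjH adj <= #|E0|.
Proof.
move=> p; rewrite /wsat; apply: bigmin_le_gen; first exact: mem_index_enum.
by rewrite /percolatingb; case: excluded_middle_informative.
Qed.

Lemma wsat_attained (TH T : finType) (adjH : rel TH) (adj : rel T) :
  exists E0, percolating adjH adj E0 /\ #|E0| = wsat adjH adj.
Proof.
rewrite /wsat.
apply: (big_ind (fun m => exists E0, percolating adjH adj E0 /\ #|E0| = m)).
- exists (edgeset adj); split => //; split => // e; split; first by exists 0.
  by case=> i; apply/subsetP/iter_edges.
- move=> x y [E1 [p1 <-]] [E2 [p2 <-]]; rewrite /minn; case: ifP => _.
    by exists E1. by exists E2.
- move=> E0; rewrite /percolatingb; case: excluded_middle_informative => // p _.
  by exists E0.
Qed.

Lemma reach_list (TH T : finType) (adjH : rel TH) (adj : rel T) (E0 : {set {set T}})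
  (s : seq {set T}) :
  (forall e, e \in s -> exists i, e \in iter i (bp_step adjH adj) E0) ->
  exists i, forall e, e \in s -> e \in iter i (bp_step adjH adj) E0.
Proof.
elim: s => [|a s IH] h; first by exists 0.
have [i hi] := IH (fun e es => h e (@mem_behead _ (a :: s) e es)).
have [j hj] := h a (mem_head _ _).
exists (maxn i j) => e; rewrite inE => /orP [/eqP ->|es].
  exact: (subsetP (iter_mono _ _ _ (leq_maxr i j))).
exact: (subsetP (iter_mono _ _ _ (leq_maxl i j))) (hi e es).
Qed.

Lemma fireR (T : finType) (adj : rel T) (sym : symmetric adj) (irr : irreflexive adj)
  k (E0 : {set {set T}}) c y (S : {set T}) :
  adj c y -> (forall z, z \in S -> adj c z) -> y \notin S -> k <= #|S| ->
  (forall z, z \in S -> exists i, [set c; z] \in iter i (bp_step (star k.+1) adj) E0) ->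
  exists i, [set c; y] \in iter i (bp_step (star k.+1) adj) E0.
Proof.
move=> acy aS yS kS hS.
have [i hi] : exists i, forall e, e \in [seq [set c; z] | z <- enum S] ->
    e \in iter i (bp_step (star k.+1) adj) E0.
  apply: reach_list => e /mapP [z zS ->]; apply: hS; by rewrite mem_enum in zS.
exists i.+1 => /=; apply: (fire sym irr acy aS yS kS) => z zS; apply: hi.
by apply/mapP; exists z; rewrite ?mem_enum.
Qed.

Lemma card_lt (n t : nat) : t <= n -> #|[set s : 'I_n | s < t]| = t.
Proof.
move=> tn.
have -> : [set s : 'I_n | s < t] = widen_ord tn @: [set: 'I_t].
  apply/setP => s; rewrite inE; apply/idP/imsetP.
    by move=> st; exists (Ordinal st) => //; apply: val_inj.
  by case=> j _ ->; exact: ltn_ord j.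
rewrite card_imset ?cardsT ?card_ord //.
by move=> a b /(congr1 val) /= /val_inj.
Qed.

Lemma imset_pair2 (T U : finType) (t : U) (a b : T) :
  (fun x => (x, t)) @: [set a; b] = [set (a, t); (b, t)].
Proof. by rewrite imsetU1 imset_set1. Qed.

Theorem lemma3p5 (T : finType) (adj : rel T)
  (adj_sym : symmetric adj) (adj_irr : irreflexive adj)
  (n r : nat) (n_pos : 0 < n) (r_pos : 0 < r)
  (mindeg : forall x : T, r <= #|[set y | adj x y]|) :
  me (cartprod adj (Kn n)) r <= \sum_(t < n) me adj (r - t).
Proof.
set adjH := cartprod adj (Kn n).
have symH : symmetric adjH.
  move=> u v; rewrite /adjH /cartprod /Kn [u.1 == _]eq_sym [u.2 == _]eq_sym.
  by rewrite adj_sym.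
have irrH : irreflexive adjH by move=> u; rewrite /adjH /cartprod /Kn !eqxx adj_irr.
have hA : forall t : 'I_n, exists A : {set {set T}}, A \subset edgeset adj /\
    (0 < r - t -> percolating (star (r - t).+1) adj A) /\ #|A| = me adj (r - t).
  move=> t; rewrite /me; case: eqP => [->|_].
    by exists set0; rewrite sub0set cards0.
  have [A [pA cA]] := wsat_attained (star (r - t).+1) adj.
  by exists A; split; [case: pA | split].
pose A t := proj1_sig (constructive_indefinite_description _ (hA t)).
have hA' t : A t \subset edgeset adj /\
    (0 < r - t -> percolating (star (r - t).+1) adj (A t)) /\ #|A t| = me adj (r - t)
  := proj2_sig (constructive_indefinite_description _ (hA t)).
pose lift (t : 'I_n) (e : {set T}) : {set T * 'I_n} := (fun x => (x, t)) @: e.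
pose B := \bigcup_(t < n) [set lift t e | e in A t].
have cardB : #|B| <= \sum_(t < n) me adj (r - t).
  rewrite /B; apply: (@big_ind2 {set {set T * 'I_n}} nat (fun X m => #|X| <= m)).
  - by rewrite cards0.
  - move=> X1 m1 X2 m2 h1 h2; apply: leq_trans (leq_card_setU X1 X2).1 _.
    exact: leq_add.
  - move=> t _; have [_ [_ <-]] := hA' t; exact: leq_imset_card.
apply: leq_trans cardB.
have -> : me adjH r = wsat (star r.+1) adjH.
  by rewrite /me; case: eqP => // r0; rewrite r0 in r_pos.
apply: wsat_le.
have Bsub : B \subset edgeset adjH.
  apply/subsetP => e /bigcupP [t _ /imsetP [e0 e0A ->]].
  have [sA _] := hA' t.
  have /edgesetP [x [y [axy ->]]] := subsetP sA _ e0A.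
  rewrite /lift imset_pair2; apply/edgesetP; exists (x, t), (y, t); split => //.
  by rewrite /adjH /cartprod /= eqxx axy orbT.
split => // e; split; last by case=> i; apply/subsetP/iter_edges.
pose Vt (c : T) (t : nat) := [set u : T * 'I_n | (u.1 == c) && (u.2 < t)].
have cardVt c (t : 'I_n) : #|Vt c t| = t.
  have -> : Vt c t = (fun s => (c, s)) @: [set s : 'I_n | s < t].
    apply/setP => [[x s]]; rewrite !inE /=; apply/idP/imsetP.
      by case/andP => /eqP -> st; exists s; rewrite ?inE.
    by case=> s'; rewrite inE => st [-> ->]; rewrite eqxx st.
  rewrite card_imset; first by apply: card_lt; exact: ltnW (ltn_ord t).
  by move=> a b [].
have main : forall m (t : 'I_n), t < m ->
  (forall x y, adj x y ->
     exists i, [set (x, t); (y, t)] \in iter i (bp_step (star r.+1) adjH) B) /\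
  (forall x (s : 'I_n), s != t ->
     exists i, [set (x, t); (x, s)] \in iter i (bp_step (star r.+1) adjH) B).
  elim=> [|m IH] t //; rewrite ltnS leq_eqVlt => /orP [/eqP tm|]; last exact: IH.
  have vert c : forall z, z \in Vt c t -> adjH (c, t) z /\
      exists i, [set (c, t); z] \in iter i (bp_step (star r.+1) adjH) B.
    move=> [x s]; rewrite inE /= => /andP [/eqP -> st]; split.
      rewrite /adjH /cartprod /Kn /= eqxx /=; apply/orP; left; apply/negP => /eqP ts; by rewrite ts ltnn in st.
    have [_ hV] := IH s ltac:(by rewrite -tm).
    have [i hi] := hV c t ltac:(by apply/eqP => ts; rewrite ts ltnn in st).
    by exists i; rewrite setUC.
  have LT : forall x y, adj x y ->
      exists i, [set (x, t); (y, t)] \in iter i (bp_step (star r.+1) adjH) B.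
    case: (leqP r t) => rt.
      move=> x y axy; apply: (@fireR _ _ symH irrH r B _ _ (Vt x t)).
      - by rewrite /adjH /cartprod /= eqxx axy orbT.
      - by move=> z /vert [].
      - by rewrite inE /= ltnn andbF.
      - by rewrite cardVt.
      - by move=> z /vert [].
    have [_ [pA _]] := hA' t; have pA' := pA ltac:(by rewrite subn_gt0).
    have liftR : forall i ed, ed \in iter i (bp_step (star (r - t).+1) adj) (A t) ->
        exists i, lift t ed \in iter i (bp_step (star r.+1) adjH) B.
      elim=> [|i IHi] ed /=.
        move=> eA; exists 0; apply/bigcupP; exists t => //; exact: imset_f.
      case/extract => [/IHi //|[c [y [S [-> acy yS kS hS]]]]].
      rewrite /lift imset_pair2.
      apply: (@fireR _ _ symH irrH r B _ _ ((fun z => (z, t)) @: S :|: Vt c t)).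
      - by rewrite /adjH /cartprod /= eqxx acy orbT.
      - move=> z; rewrite inE => /orP [/imsetP [z0 z0S ->]|/vert [] //].
        by rewrite /adjH /cartprod /= eqxx (hS z0 z0S).1 orbT.
      - rewrite inE negb_or mem_imset ?yS /=; last by move=> a b [].
        by rewrite inE /= ltnn andbF.
      - have e1 : #|(fun z => (z, t)) @: S :|: Vt c t| ==
                  #|(fun z => (z, t)) @: S| + #|Vt c t|.
          rewrite (leq_card_setU _ _).2 -setI_eq0; apply/set0Pn => -[z]; rewrite inE => /andP [/imsetP [z0 _ ->]].
          by rewrite inE /= ltnn andbF.
        rewrite (eqP e1) card_imset ?cardVt; last by move=> a b [].
        by rewrite addnC -leq_subLR.
      - move=> z; rewrite inE => /orP [/imsetP [z0 z0S ->]|/vert [] //].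
        have [_ hz] := hS z0 z0S.
        by have := IHi _ hz; rewrite /lift imset_pair2.
    move=> x y axy.
    have /(proj2 pA' _).1 [i hi] : [set x; y] \in edgeset adj.
      by apply/edgesetP; exists x, y.
    by have := liftR i _ hi; rewrite /lift imset_pair2.
  split => // x s st.
  case: (ltnP s t) => [lst| lts].
    have [_ hV] := IH s ltac:(by rewrite -tm).
    have [i hi] := hV x t ltac:(by rewrite eq_sym).
    by exists i; rewrite setUC.
  apply: (@fireR _ _ symH irrH r B _ _ ((fun z => (z, t)) @: [set y | adj x y])).
  - rewrite /adjH /cartprod /Kn /= eqxx /=; apply/orP; left; by rewrite eq_sym.
  - by move=> z /imsetP [y0]; rewrite inE => axy0 ->; rewrite /adjH /cartprod /= eqxx axy0 orbT.
  - apply/imsetP => [[y0 _ []]] _ ts; by rewrite ts eqxx in st.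
  - rewrite card_imset ?mindeg //; by move=> a b [].
  - move=> z /imsetP [y0]; rewrite inE => axy0 ->; exact: LT.
case/edgesetP => [[x a] [[y b] [h ->]]].
move: h; rewrite /adjH /cartprod /Kn /= => /orP [/andP [/eqP <- ab]|/andP [/eqP <- axy]].
  have [_ hV] := main n.+1 a (ltnW (ltn_ord a)).
  by apply: hV; rewrite eq_sym.
have [hL _] := main n.+1 a (ltnW (ltn_ord a)).
exact: hL.
Qed.
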